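(* Let $\mu>0$ and let $\gamma$ be a curve in $\mathbb M^2(\rho)$ with constant curvature $\kappa$ satisfying $\frac{d^2}{ds^2}(e^{\mu\kappa})+(\kappa^2-\kappa/\mu+\rho)e^{\mu\kappa}=0$. Then: (1) if $\rho=0$ (Euclidean plane $\mathbb R^2$), $\gamma$ is either a geodesic (straight line) or a circle of radius $\mu$; (2) if $\rho>0$ (sphere $\mathbb S^2(\rho)$), then $0<2\sqrt\rho\,\mu\le 1$; if $2\sqrt\rho\,\mu<1$ there are two solutions, corresponding to two parallels (circles), and if $2\sqrt\rho\,\mu=1$ the solution is a circle of curvature $\sqrt\rho$; (3) if $\rho<0$ (hyperbolic plane $\mathbb H^2(\rho)$), $\gamma$ is either a circle or a hypercycle.
   Context: $\mathbb M^2(\rho)$ is the simply connected complete surface of constant curvature $\rho$; $\kappa$ denotes signed geodesic curvature and $s$ arc-length. Standing assumption in the paper: the energy index $\mu$ is positive. *)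

(* Defs.v *)
From Stdlib Require Import Reals Lra.
From Coquelicot Require Import Coquelicot.
Open Scope R_scope.

(* A curve gamma in M^2(rho), parametrized by arc length s, is represented
   (up to isometries of M^2(rho), by the fundamental theorem of plane curves
   in space forms) by its signed geodesic curvature function kappa : R -> R. *)

Definition tanh_ (x : R) : R := (exp x - exp (- x)) / (exp x + exp (- x)).

Definition const_curv_solution (rho mu : R) (kappa : R -> R) : Prop :=
  (exists k : R, forall s, kappa s = k) /\
  forall s : R,
    Derive_n (fun t => exp (mu * kappa t)) 2 s
    + (kappa s ^ 2 - kappa s / mu + rho) * exp (mu * kappa s) = 0.

Definition is_geodesic (kappa : R -> R) : Prop := forall s, kappa s = 0.

Definition is_euclid_circle (r : R) (kappa : R -> R) : Prop :=
  0 < r /\ forall s, Rabs (kappa s) = 1 / r.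

(* circle (parallel) in S^2(rho), rho > 0: geodesic circle of radius
   r in (0, pi/sqrt rho), curvature sqrt rho * cot (sqrt rho * r) (signed) *)
Definition is_sphere_parallel (rho : R) (kappa : R -> R) : Prop :=
  exists r : R, 0 < r /\ r < PI / sqrt rho /\
    forall s, kappa s = sqrt rho * cos (sqrt rho * r) / sin (sqrt rho * r).

(* geodesic circle of radius r > 0 in H^2(rho), rho < 0:
   |kappa| = sqrt(-rho) coth(sqrt(-rho) r) *)
Definition is_hyp_circle (rho : R) (kappa : R -> R) : Prop :=
  exists r : R, 0 < r /\
    forall s, Rabs (kappa s) = sqrt (- rho) / tanh_ (sqrt (- rho) * r).

(* hypercycle (equidistant curve at distance d > 0 from a geodesic) in
   H^2(rho): |kappa| = sqrt(-rho) tanh(sqrt(-rho) d) *)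
Definition is_hypercycle (rho : R) (kappa : R -> R) : Prop :=
  exists d : R, 0 < d /\
    forall s, Rabs (kappa s) = sqrt (- rho) * tanh_ (sqrt (- rho) * d).

(* Main.v *)
Require Import Defs.
From Stdlib Require Import Reals Lra.
From Coquelicot Require Import Coquelicot.
Open Scope R_scope.

Lemma key (rho mu k : R) (kappa : R -> R) (hmu : 0 < mu) (H : forall s, kappa s = k) :
  const_curv_solution rho mu kappa <-> mu * k ^ 2 - k + mu * rho = 0.
Proof.
  unfold const_curv_solution. split.
  - intros [_ Hs]. specialize (Hs 0).
    rewrite (Derive_n_ext _ (fun _ => exp (mu * k))) in Hs by (intro; rewrite H; auto).
    rewrite Derive_n_const, H in Hs.
    assert (He := exp_pos (mu * k)).
    assert (Q : k ^ 2 - k / mu + rho = 0).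
    { destruct (Rmult_integral _ _ (eq_trans (eq_sym (Rplus_0_l _)) Hs)) as [h|h];
        [| lra]. lra. }
    replace (mu * k ^ 2 - k + mu * rho) with (mu * (k ^ 2 - k / mu + rho)) by (field; lra).
    rewrite Q; ring.
  - intros Q. split; [exists k; exact H|]. intros s.
    rewrite (Derive_n_ext _ (fun _ => exp (mu * k))) by (intro; rewrite H; auto).
    rewrite Derive_n_const, H.
    replace (k ^ 2 - k / mu + rho) with ((mu * k ^ 2 - k + mu * rho) / mu) by (field; lra).
    rewrite Q. unfold Rdiv. ring.
Qed.

Lemma tanh_surj (t : R) : 0 < t < 1 -> exists x, 0 < x /\ tanh_ x = t.
Proof.
  intros [h0 h1].
  assert (Hp : 0 < (1 + t) / (1 - t)) by (apply Rdiv_lt_0_compat; lra).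
  assert (Hg : 1 < (1 + t) / (1 - t)).
  { apply (Rmult_lt_reg_r (1 - t)); [lra|]. unfold Rdiv. rewrite Rmult_assoc, Rinv_l by lra. lra. }
  exists (ln ((1 + t) / (1 - t)) / 2). split.
  - assert (0 < ln ((1 + t) / (1 - t))); [|lra].
    rewrite <- ln_1. apply ln_increasing; lra.
  - unfold tanh_. rewrite exp_Ropp.
    set (x := ln ((1 + t) / (1 - t)) / 2).
    assert (HE : exp x * exp x = (1 + t) / (1 - t)).
    { rewrite <- exp_plus. replace (x + x) with (ln ((1 + t) / (1 - t))) by (unfold x; field).
      apply exp_ln; auto. }
    assert (Ep := exp_pos x). set (E := exp x) in *.
    assert (HE' : (1 - t) * (E * E) = 1 + t).
    { rewrite HE. field. lra. }
    apply (Rmult_eq_reg_r (E * (E + / E))).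
    2: { apply Rmult_integral_contrapositive; split; [lra|].
         assert (0 < / E) by (apply Rinv_0_lt_compat; lra). lra. }
    assert (0 < / E) by (apply Rinv_0_lt_compat; lra).
    replace ((E - / E) / (E + / E) * (E * (E + / E))) with (E * E - 1) by (field; lra).
    replace (t * (E * (E + / E))) with (t * (E * E + 1)) by (field; lra).
    nra.
Qed.

Lemma cot_surj (a k : R) : 0 < a -> exists r, 0 < r /\ r < PI / a /\
   k = a * cos (a * r) / sin (a * r).
Proof.
  intros ha.
  destruct (atan_bound (k / a)) as [b1 b2].
  exists ((PI / 2 - atan (k / a)) / a).
  replace (a * ((PI / 2 - atan (k / a)) / a)) with (PI / 2 - atan (k / a)) by (field; lra).
  rewrite sin_shift, cos_shift.
  assert (PI / 2 - atan (k / a) < PI) by lra.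
  assert (0 < PI / 2 - atan (k / a)) by lra.
  split; [apply Rdiv_lt_0_compat; lra|]. split.
  - unfold Rdiv. apply Rmult_lt_compat_r; [apply Rinv_0_lt_compat; lra|]. lra.
  - assert (Hc : 0 < cos (atan (k / a))) by (apply cos_gt_0; lra).
    assert (Ht := tan_atan (k / a)). unfold tan in Ht.
    assert (Hs : sin (atan (k / a)) = k / a * cos (atan (k / a))).
    { set (y := atan (k / a)) in *. rewrite <- Ht. field. lra. }
    rewrite Hs. field. lra.
Qed.

Lemma const_of (rho mu : R) (kappa : R -> R) : 0 < mu ->
  const_curv_solution rho mu kappa ->
  exists k, (forall s, kappa s = k) /\ mu * k ^ 2 - k + mu * rho = 0.
Proof.
  intros hmu Hc. destruct (proj1 Hc) as [k Hk].
  exists k. split; auto. apply (proj1 (key rho mu k kappa hmu Hk)). auto.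
Qed.

Theorem proposition2p4 (rho mu : R) (hmu : 0 < mu) :
  (* (1) Euclidean plane *)
  (rho = 0 -> forall kappa : R -> R, const_curv_solution rho mu kappa ->
     is_geodesic kappa \/ is_euclid_circle mu kappa) /\
  (* (2) sphere *)
  (0 < rho ->
     ((exists kappa : R -> R, const_curv_solution rho mu kappa) ->
        0 < 2 * sqrt rho * mu <= 1) /\
     (2 * sqrt rho * mu < 1 ->
        exists k1 k2 : R, k1 <> k2 /\
          const_curv_solution rho mu (fun _ => k1) /\
          const_curv_solution rho mu (fun _ => k2) /\
          is_sphere_parallel rho (fun _ => k1) /\
          is_sphere_parallel rho (fun _ => k2) /\
          forall kappa : R -> R, const_curv_solution rho mu kappa ->
            (forall s, kappa s = k1) \/ (forall s, kappa s = k2)) /\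
     (2 * sqrt rho * mu = 1 ->
        const_curv_solution rho mu (fun _ => sqrt rho) /\
        forall kappa : R -> R, const_curv_solution rho mu kappa ->
          forall s, kappa s = sqrt rho)) /\
  (* (3) hyperbolic plane *)
  (rho < 0 -> forall kappa : R -> R, const_curv_solution rho mu kappa ->
     is_hyp_circle rho kappa \/ is_hypercycle rho kappa).
Proof.
  split; [|split].
  - intros -> kappa Hc. destruct (const_of _ _ _ hmu Hc) as [k [Hk Q]].
    assert (Hf : k * (mu * k - 1) = 0) by (rewrite <- Q; ring).
    destruct (Rmult_integral _ _ Hf) as [h|h].
    + left. intro s. rewrite Hk; auto.
    + right. split; auto. intro s. rewrite Hk.
      assert (k = 1 / mu).
      { replace k with ((mu * k) / mu) by (field; lra). f_equal. lra. }
      rewrite Rabs_pos_eq; [lra|]. subst k. unfold Rdiv. rewrite Rmult_1_l.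
      left; apply Rinv_0_lt_compat; lra.
  - intros hr. assert (Hs := sqrt_sqrt rho (Rlt_le _ _ hr)).
    assert (Hsp := sqrt_lt_R0 rho hr). set (q := sqrt rho) in *.
    split; [|split].
    + intros [kappa Hc]. destruct (const_of _ _ _ hmu Hc) as [k [Hk Q]].
      split; [nra|].
      assert (Q' : (mu * k) ^ 2 - mu * k + (q * mu) ^ 2 = 0).
      { replace ((q * mu) ^ 2) with (mu * (q * q) * mu) by ring. rewrite Hs.
        replace ((mu * k) ^ 2 - mu * k + mu * rho * mu) with (mu * (mu * k ^ 2 - k + mu * rho)) by ring.
        rewrite Q; ring. }
      assert (Hy : (2 * (q * mu)) ^ 2 <= 1) by (assert (0 <= (2 * (mu * k) - 1) ^ 2) by apply pow2_ge_0; nra).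
      assert (0 < q * mu) by nra.
      destruct (Rle_or_lt (2 * q * mu) 1) as [h|h]; [lra|nra].
    + intros hlt.
      assert (HD : 0 < 1 - 4 * mu ^ 2 * rho).
      { rewrite <- Hs. assert (q * mu < 1/2) by lra. assert (0 < q * mu) by (apply Rmult_lt_0_compat; lra). replace (4 * mu ^ 2 * (q * q)) with (4 * ((q * mu) * (q * mu))) by ring. nra. }
      assert (Hd := sqrt_sqrt _ (Rlt_le _ _ HD)).
      assert (Hdp := sqrt_lt_R0 _ HD). set (d := sqrt (1 - 4 * mu ^ 2 * rho)) in *.
      exists ((1 + d) / (2 * mu)), ((1 - d) / (2 * mu)).
      split; [| split; [|split; [|split; [|split]]]].
      * intro h. apply (Rmult_eq_compat_r (2 * mu)) in h.
        field_simplify in h; lra.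
      * apply (proj2 (key _ _ _ _ hmu (fun _ => eq_refl))). field_simplify; [|lra].
        replace (d ^ 2) with (d * d) by ring. rewrite Hd. field_simplify; lra.
      * apply (proj2 (key _ _ _ _ hmu (fun _ => eq_refl))). field_simplify; [|lra].
        replace (d ^ 2) with (d * d) by ring. rewrite Hd. field_simplify; lra.
      * destruct (cot_surj q ((1 + d) / (2 * mu)) Hsp) as [r [h1 [h2 h3]]].
        exists r. split; [|split]; auto.
      * destruct (cot_surj q ((1 - d) / (2 * mu)) Hsp) as [r [h1 [h2 h3]]].
        exists r. split; [|split]; auto.
      * intros kappa Hc. destruct (const_of _ _ _ hmu Hc) as [k [Hk Q]].
        assert (Hf : (2 * mu * k - 1 - d) * (2 * mu * k - 1 + d) = 0).
        { replace ((2 * mu * k - 1 - d) * (2 * mu * k - 1 + d)) with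
            (4 * mu * (mu * k ^ 2 - k + mu * rho) + (1 - 4 * mu ^ 2 * rho) - d * d) by ring.
          rewrite Q, Hd. ring. }
        destruct (Rmult_integral _ _ Hf) as [h|h].
        -- left. intro s. rewrite Hk. replace k with ((2 * mu * k) / (2 * mu)) by (field; lra). f_equal. lra.
        -- right. intro s. rewrite Hk. replace k with ((2 * mu * k) / (2 * mu)) by (field; lra). f_equal. lra.
    + intros heq. split.
      * apply (proj2 (key _ _ _ _ hmu (fun _ => eq_refl))).
        replace (mu * q ^ 2 - q + mu * rho) with (q * (2 * q * mu - 1)) by (rewrite <- Hs; ring).
        rewrite heq. ring.
      * intros kappa Hc s. destruct (const_of _ _ _ hmu Hc) as [k [Hk Q]]. rewrite Hk.
        assert (Hf : (2 * mu * k - 1) * (2 * mu * k - 1) = 0).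
        { replace ((2 * mu * k - 1) * (2 * mu * k - 1)) with
            (4 * mu * (mu * k ^ 2 - k + mu * (q * q)) - (2 * q * mu - 1) * (2 * q * mu + 1)) by ring.
          rewrite Hs, Q, heq. ring. }
        destruct (Rmult_integral _ _ Hf) as [h|h]; nra.
  - intros hr kappa Hc. destruct (const_of _ _ _ hmu Hc) as [k [Hk Q]].
    assert (Hs := sqrt_sqrt (- rho) ltac:(lra)).
    assert (Hap := sqrt_lt_R0 (- rho) ltac:(lra)). set (a := sqrt (- rho)) in *.
    assert (hk0 : k <> 0) by (intro; subst k; nra).
    assert (hka : Rabs k <> a).
    { intro h. assert (k * k = a * a) by (rewrite <- h; rewrite <- Rabs_mult, Rabs_pos_eq; nra).
      apply hk0. nra. }
    assert (Hkp : 0 < Rabs k) by (apply Rabs_pos_lt; auto).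
    destruct (Rlt_or_le a (Rabs k)) as [h|h].
    + left. unfold is_hyp_circle; fold a. destruct (tanh_surj (a / Rabs k)) as [x [hx Hx]].
      { split; [apply Rdiv_lt_0_compat; lra|].
        apply (Rmult_lt_reg_r (Rabs k)); [lra|]. field_simplify; lra. }
      exists (x / a). split; [apply Rdiv_lt_0_compat; lra|].
      intro s. rewrite Hk. replace (a * (x / a)) with x by (field; lra).
      rewrite Hx. field. split; lra.
    + right. unfold is_hypercycle; fold a. destruct (tanh_surj (Rabs k / a)) as [x [hx Hx]].
      { split; [apply Rdiv_lt_0_compat; lra|].
        apply (Rmult_lt_reg_r a); [lra|]. field_simplify; lra. }
      exists (x / a). split; [apply Rdiv_lt_0_compat; lra|].
      intro s. rewrite Hk. replace (a * (x / a)) with x by (field; lra).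
      rewrite Hx. field. lra.
Qed.
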